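(* Assume (A1), (A2), (A3) (see context) and let the sequences be generated by the inexact DPMM algorithm. Then for every $k\ge0$, $$Q\xi^k+V^k\in(Q+\Phi)(\widehat\xi^k)\quad(\text{i.e. }\widehat\xi^k=(Q+\Phi)^{-1}(Q\xi^k+V^k)),\qquad \xi^{k+1}=\xi^k-M(\xi^k-\widehat\xi^k),$$ where $V^k=\mathrm{col}(v_1^k,\dots,v_m^k,0_{m(p+q)},0_{r(p+q)})$ satisfies $\|V^k\|\le\varepsilon^k:=\big(\sum_{i=1}^m(\varepsilon_i^k)^2\big)^{1/2}$.
   Context: Problem. Let $m\ge2$, $n_1,\dots,n_m\ge1$, $p,q\ge0$ integers, $n=\sum_in_i$, $\mathcal V=\{1,\dots,m\}$. For $i\in\mathcal V$ let $f_i:\mathbb R^{n_i}\to\mathbb R$, $A_i\in\mathbb R^{p\times n_i}$, $b_i\in\mathbb R^p$, $g_i:\mathbb R^{n_i}\to\mathbb R^q$, $\Omega_i\subseteq\mathbb R^{n_i}$, $G_i(\mathrm x_i)=\mathrm{col}(A_i\mathrm x_i-b_i,g_i(\mathrm x_i))$, $\mathcal K=\{0_p\}\times\mathbb R^q_-$, $\mathcal K^\circ=\mathbb R^p\times\mathbb R^q_+$. Problem (P): minimize $\sum_if_i(\mathrm x_i)$ s.t. $\sum_iG_i(\mathrm x_i)\in\mathcal K$, $\mathrm x_i\in\Omega_i$. $\ell_i(\mathrm x_i,\mathrm y)=f_i(\mathrm x_i)+\mathrm y^\top G_i(\mathrm x_i)+\delta_{\Omega_i}(\mathrm x_i)-\delta_{\mathcal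 K^\circ}(\mathrm y)$ ($\delta_S$ indicator). Assumptions. (A1) $\mathcal G=(\mathcal V,\mathcal E)$ connected undirected; $L\in\mathbb R^{m\times m}$ symmetric, compatible with $\mathcal G$ ($L_{ij}=0$ for $i\ne j$, $(i,j)\notin\mathcal E$; $\mathrm{null}(L)=\mathrm{span}\{\mathbf 1_m\}$), $L=U^\top U$, $U\in\mathbb R^{r\times m}$ full row rank, $U\mathbf 1_m=0$. (A2) $f_i$ and components of $g_i$ proper closed convex, $\Omega_i$ nonempty closed convex, (P) has an optimal solution. (A3) there is $\bar{\mathrm x}$ with $\bar{\mathrm x}_i\in\mathrm{int}\,\Omega_i$, $\sum_i(A_i\bar{\mathrm x}_i-b_i)=0$, $\sum_ig_i(\bar{\mathrm x}_i)<0$. Operator. $\mathbf L=L\otimes I_{p+q}$, $\mathbf U=U\otimes I_{p+q}$; $\mathcal L(\mathrm x,\mathrm Y)=\sum_i\ell_i(\mathrm x_i,\mathrm y_i)$; $\partial_{\mathrm Y}\mathcal L:=-\partial_{\mathrm Y}[-\mathcal L]$; $\Phi(\mathrm x,\mathrm Y,\mathrm Z)=\partial_{\mathrm x}\mathcal L(\mathrm x,\mathrm Y)\times(-\partial_{\mathrm Y}\mathcal L(\mathrm x,\mathrm Y)+\mathbf U^\top\mathrm Z)\times\{-\mathbf U\mathrm Y\}$, $\mathrm Z\in\mathbb R^{r(p+q)}$. Matrices. Parameters $\theta_i,\alpha_i,\gamma_i>0$, $\beta>0$; $\Theta=\mathrm{diag}(\theta_iI_{n_i})$, $\Upsilon=\mathrm{diag}(\alpha_iI_{n_i})$,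 $\Gamma=\mathrm{diag}(\gamma_iI_{p+q})$; $Q=\begin{pmatrix}\Upsilon^{-1}&0&0\\0&\Gamma^{-1}&-\mathbf U^\top\\0&0&\frac1\beta I\end{pmatrix}$, $M=\begin{pmatrix}\Theta&0&0\\0&I&-\Gamma\mathbf U^\top\\0&0&I\end{pmatrix}$. Algorithm (inexact DPMM). $\mathcal P_{\mathcal K^\circ}(u_1,u_2)=(u_1,\max(u_2,0))$. Initialize $\mathrm x_i^0\in\Omega_i$, $\mathrm y_i^0\in\mathcal K^\circ$, $\lambda_i^0=0$. At iteration $k$, agent $i$ chooses $\varepsilon_i^k\ge0$, sets $\phi_i^k(\mathrm x_i,\mathrm y_i)=f_i(\mathrm x_i)+\frac1{2\gamma_i}(\|\mathcal P_{\mathcal K^\circ}(\mathrm y_i+\gamma_iG_i(\mathrm x_i))\|^2-\|\mathrm y_i\|^2)+\frac1{2\alpha_i}\|\mathrm x_i-\mathrm x_i^k\|^2+\delta_{\Omega_i}(\mathrm x_i)$, computes $\widehat{\mathrm x}_i^k$ and $v_i^k\in\partial_{\mathrm x_i}\phi_i^k(\widehat{\mathrm x}_i^k,\mathrm y_i^k-\gamma_i\lambda_i^k)$ with $\|v_i^k\|\le\varepsilon_i^k$, then $\widehat{\mathrm y}_i^k=\mathcal P_{\mathcal K^\circ}(\mathrm y_i^k-\gamma_i\lambda_i^k+\gamma_iG_i(\widehat{\mathrm x}_i^k))$, $\mathrm x_i^{k+1}=(1-\theta_i)\mathrm x_i^k+\theta_i\widehat{\mathrm x}_i^k$, $\lambda_i^{k+1}=\lambda_i^k+\beta\sum_jL_{ij}\widehat{\mathrm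 y}_j^k$, $\mathrm y_i^{k+1}=\widehat{\mathrm y}_i^k+\gamma_i(\lambda_i^k-\lambda_i^{k+1})$. Stack $\mathrm x^k,\mathrm Y^k,\Lambda^k=\mathrm{col}(\lambda_i^k),\widehat{\mathrm x}^k,\widehat{\mathrm Y}^k$; $\widehat\Lambda^k:=\Lambda^{k+1}$; $\mathrm Z^k,\widehat{\mathrm Z}^k$ are the vectors with $\Lambda^k=\mathbf U^\top\mathrm Z^k$, $\widehat\Lambda^k=\mathbf U^\top\widehat{\mathrm Z}^k$; $\xi^k=\mathrm{col}(\mathrm x^k,\mathrm Y^k,\mathrm Z^k)$, $\widehat\xi^k=\mathrm{col}(\widehat{\mathrm x}^k,\widehat{\mathrm Y}^k,\widehat{\mathrm Z}^k)$. *)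

(* Defs.v *)
From HB Require Import structures.
From mathcomp Require Import all_boot all_order all_algebra.
From mathcomp Require Import all_classical all_reals all_analysis.
Set Implicit Arguments. Unset Strict Implicit. Unset Printing Implicit Defensive.
Import Order.TTheory GRing.Theory Num.Theory.
Import numFieldNormedType.Exports.
Local Open Scope classical_set_scope.
Local Open Scope ring_scope.

Section Defs.
Variable R : realType.

Definition dotv d (u v : 'cV[R]_d) : R := \sum_(j < d) u j 0 * v j 0.
Definition vnorm d (u : 'cV[R]_d) : R := Num.sqrt (dotv u u).

Definition convex_fun d (F : 'cV[R]_d -> R) : Prop :=
  forall x y t, 0 <= t <= 1 -> F (t *: x + (1 - t) *: y) <= t * F x + (1 - t) * F y.
Definition closed_fun d (F : 'cV[R]_d -> R) : Prop :=
  closed [set xt : 'cV[R]_d * R | F xt.1 <= xt.2].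

Definition indic T (S : set T) (x : T) : \bar R :=
  if `[< S x >] then 0%E else +oo%E.

Definition coneK p q : set 'cV[R]_(p + q) :=
  [set y | usubmx y = 0 /\ forall j, dsubmx y j 0 <= 0].
Definition coneKo p q : set 'cV[R]_(p + q) :=
  [set y | forall j, 0 <= dsubmx y j 0].
Definition projKo p q (u : 'cV[R]_(p + q)) : 'cV[R]_(p + q) :=
  col_mx (usubmx u) (map_mx (fun a => Num.max a 0) (dsubmx u)).

Definition Gfun p q d (A : 'M[R]_(p, d)) (b : 'cV[R]_p) (g : 'cV[R]_d -> 'cV[R]_q)
  (x : 'cV[R]_d) : 'cV[R]_(p + q) := col_mx (A *m x - b) (g x).

Definition subdiff d (F : 'cV[R]_d -> \bar R) (x : 'cV[R]_d) : set 'cV[R]_d :=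
  [set v | F x \is a fin_num /\
           forall z, (F x + (dotv v (z - x))%:E <= F z)%E].

(** stacked vectors col(w_1,...,w_k) with w_i in R^(d i), with the
    Euclidean inner product sum_i <w_i, w'_i> *)
Definition stk (I : finType) (d : I -> nat) := forall i : I, 'cV[R]_(d i).
Definition stk_dot (I : finType) (d : I -> nat) (u v : stk d) : R :=
  \sum_i dotv (u i) (v i).
Definition stk_sub (I : finType) (d : I -> nat) (u v : stk d) : stk d :=
  fun i => u i - v i.
Definition subdiffS (I : finType) (d : I -> nat) (F : stk d -> \bar R) (x : stk d)
  : set (stk d) :=
  [set v | F x \is a fin_num /\
           forall z, (F x + (stk_dot v (stk_sub z x))%:E <= F z)%E].

(** (U ⊗ I) Y  and  (U ⊗ I)^T Z *)
Definition Ukr m r s (U : 'M[R]_(r, m)) (Y : 'I_m -> 'cV[R]_s) : 'I_r -> 'cV[R]_s :=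
  fun j => \sum_(i < m) U j i *: Y i.
Definition UkrT m r s (U : 'M[R]_(r, m)) (Z : 'I_r -> 'cV[R]_s) : 'I_m -> 'cV[R]_s :=
  fun i => \sum_(j < r) U j i *: Z j.

Record pt m (n : 'I_m -> nat) (s r : nat) := Pt {
  ptx : forall i : 'I_m, 'cV[R]_(n i);
  pty : 'I_m -> 'cV[R]_s;
  ptz : 'I_r -> 'cV[R]_s }.

Definition pt_add m n s r (a b : @pt m n s r) : pt n s r :=
  Pt (fun i => ptx a i + ptx b i) (fun i => pty a i + pty b i) (fun j => ptz a j + ptz b j).
Definition pt_sub m n s r (a b : @pt m n s r) : pt n s r :=
  Pt (fun i => ptx a i - ptx b i) (fun i => pty a i - pty b i) (fun j => ptz a j - ptz b j).
Definition pt_norm m n s r (a : @pt m n s r) : R :=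
  Num.sqrt (\sum_i vnorm (ptx a i) ^+ 2 + \sum_i vnorm (pty a i) ^+ 2
            + \sum_j vnorm (ptz a j) ^+ 2).

Definition ell p q d (f : 'cV[R]_d -> R) (A : 'M[R]_(p, d)) (b : 'cV[R]_p)
  (g : 'cV[R]_d -> 'cV[R]_q) (Om : set 'cV[R]_d) (x : 'cV[R]_d) (y : 'cV[R]_(p + q))
  : \bar R :=
  ((f x + dotv y (Gfun A b g x))%:E + indic Om x - indic (@coneKo p q) y)%E.

Definition Lag m (n : 'I_m -> nat) p q (f : forall i, 'cV[R]_(n i) -> R)
  (A : forall i, 'M[R]_(p, n i)) (b : 'I_m -> 'cV[R]_p)
  (g : forall i, 'cV[R]_(n i) -> 'cV[R]_q) (Om : forall i, set 'cV[R]_(n i))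
  (x : forall i, 'cV[R]_(n i)) (Y : 'I_m -> 'cV[R]_(p + q)) : \bar R :=
  (\sum_(i < m) ell (f i) (A i) (b i) (g i) (Om i) (x i) (Y i))%E.

(** Phi(x,Y,Z) = d_x L(x,Y) x (-d_Y L(x,Y) + U^T Z) x {-U Y},
    with d_Y L := - d_Y[-L], so -d_Y L = d_Y[-L]. *)
Definition Phi m (n : 'I_m -> nat) p q r (f : forall i, 'cV[R]_(n i) -> R)
  (A : forall i, 'M[R]_(p, n i)) (b : 'I_m -> 'cV[R]_p)
  (g : forall i, 'cV[R]_(n i) -> 'cV[R]_q) (Om : forall i, set 'cV[R]_(n i))
  (U : 'M[R]_(r, m)) (xi : pt n (p + q) r) : set (pt n (p + q) r) :=
  [set w | subdiffS (fun x' => Lag f A b g Om x' (pty xi)) (ptx xi) (ptx w)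
        /\ (exists2 u, subdiffS (d := fun _ : 'I_m => (p + q)%N)
                             (fun Y' => - Lag f A b g Om (ptx xi) Y')%E (pty xi) u
                     & pty w = fun i => u i + UkrT U (ptz xi) i)
        /\ ptz w = fun j => - Ukr U (pty xi) j].

Definition Qop m (n : 'I_m -> nat) s r (alpha gamma : 'I_m -> R) (beta : R)
  (U : 'M[R]_(r, m)) (xi : pt n s r) : pt n s r :=
  Pt (fun i => (alpha i)^-1 *: ptx xi i)
     (fun i => (gamma i)^-1 *: pty xi i - UkrT U (ptz xi) i)
     (fun j => beta^-1 *: ptz xi j).

Definition Mop m (n : 'I_m -> nat) s r (theta gamma : 'I_m -> R)
  (U : 'M[R]_(r, m)) (xi : pt n s r) : pt n s r :=
  Pt (fun i => theta i *: ptx xi i)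
     (fun i => pty xi i - gamma i *: UkrT U (ptz xi) i)
     (fun j => ptz xi j).

Definition QPhi m (n : 'I_m -> nat) p q r f A b g Om (alpha gamma : 'I_m -> R) (beta : R)
  (U : 'M[R]_(r, m)) (xi : pt n (p + q) r) : set (pt n (p + q) r) :=
  [set pt_add (Qop alpha gamma beta U xi) w | w in @Phi m n p q r f A b g Om U xi].

(** phi_i^k(., y): the function minimised (inexactly) by agent i *)
Definition phik p q d (f : 'cV[R]_d -> R) (A : 'M[R]_(p, d)) (b : 'cV[R]_p)
  (g : 'cV[R]_d -> 'cV[R]_q) (Om : set 'cV[R]_d) (gam alp : R) (xk : 'cV[R]_d)
  (y : 'cV[R]_(p + q)) (x : 'cV[R]_d) : \bar R :=
  ((f x + (2 * gam)^-1 * (vnorm (projKo (y + gam *: Gfun A b g x)) ^+ 2 - vnorm y ^+ 2)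
     + (2 * alp)^-1 * vnorm (x - xk) ^+ 2)%:E + indic Om x)%E.

End Defs.

(* Main.v *)
Require Import Defs.
From HB Require Import structures.
From mathcomp Require Import all_boot all_order all_algebra.
From mathcomp Require Import all_classical all_reals all_analysis.
From mathcomp Require Import ring lra.
Import Order.TTheory GRing.Theory Num.Theory.
Import numFieldNormedType.Exports.
Local Open Scope classical_set_scope.
Local Open Scope ring_scope.

Section H.
Variable R : realType.

Lemma vnorm_sq d (u : 'cV[R]_d) : vnorm u ^+ 2 = dotv u u.
Proof.
rewrite /vnorm sqr_sqrtr // /dotv; apply: sumr_ge0 => j _.
by rewrite -expr2 sqr_ge0.
Qed.

Lemma max0_sq (c c' s : R) : c' <= c + s ->
  Num.max c' 0 * Num.max c' 0 <= Num.max c 0 * Num.max c 0 + 2 * Num.max c 0 * s + s * s.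
Proof.
move=> h.
have [hc|hc] := leP c 0; have [hc'|hc'] := leP c' 0; try nra; have := sqr_ge0 (c + s); nra.
Qed.

Lemma coordS2 p q (u w : 'cV[R]_(p + q)) j (s : R) :
  (forall k, j = lshift q k -> u j 0 = w j 0 + s) ->
  (forall k, j = rshift p k -> u j 0 <= w j 0 + s) ->
  projKo u j 0 * projKo u j 0 <=
    projKo w j 0 * projKo w j 0 + 2 * projKo w j 0 * s + s * s.
Proof.
move=> hL hR; case: (split_ordP j) => k ej.
  have h := hL k ej; subst j; rewrite /projKo !col_mxEu !mxE h; lra.
have h := hR k ej; subst j; rewrite /projKo !col_mxEd !mxE.
exact: max0_sq.
Qed.

Lemma coordY p q (w Y : 'cV[R]_(p + q)) j :
  coneKo Y -> (w j 0 - projKo w j 0) * (Y j 0 - projKo w j 0) <= 0.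
Proof.
move=> hY; case: (split_ordP j) => k ->.
  by rewrite /projKo !col_mxEu !mxE subrr mul0r.
rewrite /projKo !col_mxEd !mxE.
have := hY k; rewrite mxE => hk.
have [hc|hc] := leP (w (rshift p k) 0) 0; nra.
Qed.

Lemma projKo_cone p q (u : 'cV[R]_(p + q)) : coneKo (projKo u).
Proof. by move=> k; rewrite /projKo col_mxKd mxE le_max lexx orbT. Qed.

Lemma limit_arg (a b C : R) : 0 <= C ->
  (forall t, 0 < t -> t <= 1 -> t * a <= t * b + t ^+ 2 * C) -> a <= b.
Proof.
move=> hC h; rewrite leNgt; apply/negP => hba.
set dd := a - b.
have hd : 0 < dd by rewrite /dd subr_gt0.
set t := dd / (dd + C).
have hdC : 0 < dd + C by lra.
have ht0 : 0 < t by rewrite /t divr_gt0.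
have htE : t * (dd + C) = dd by rewrite /t mulfVK // gt_eqF.
have ht1 : t <= 1 by rewrite /t ler_pdivrMr // mul1r; lra.
have := h t ht0 ht1.
have htC : t * C = dd - t * dd by lra.
rewrite expr2 -mulrA htC.
move=> h2.
have h3 : 0 < t * (t * dd) by apply: mulr_gt0 => //; apply: mulr_gt0.
have h4 : t * dd <= t * (dd - t * dd) by rewrite /dd in h2 *; lra.
nra.
Qed.


Lemma dotv_ge0 d (u : 'cV[R]_d) : 0 <= dotv u u.
Proof. by rewrite -vnorm_sq sqr_ge0. Qed.

Lemma conv_in d (Om : set 'cV[R]_d) (a b : 'cV[R]_d) (t : R) :
  convex_set Om -> 0 <= t -> t <= 1 -> Om a -> Om b -> Om (t *: a + (1 - t) *: b).
Proof.
move=> hc h0 h1 ha hb.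
have ht : Itv.spec (@Itv.num_sem R) (Itv.Real `[0%Z, 1%Z]) t.
  by rewrite /= /Itv.num_sem /= num_real in_itv /= h0 h1.
pose tt : {i01 R} := @Itv.Def _ _ _ t ht.
have := hc a b tt.
by rewrite !inE; move=> /(_ ha hb).
Qed.

Lemma xpart p q d (f : 'cV[R]_d -> R) (A : 'M[R]_(p,d)) (b : 'cV[R]_p)
  (g : 'cV[R]_d -> 'cV[R]_q) (Om : set 'cV[R]_d) (gam alp : R)
  (xk xh v z : 'cV[R]_d) (yt : 'cV[R]_(p + q)) :
  convex_fun f -> (forall j : 'I_q, convex_fun (fun z => g z j 0)) ->
  convex_set Om -> 0 < gam -> 0 < alp -> Om xh -> Om z ->
  (forall z', Om z' ->
     f xh + (2 * gam)^-1 * (vnorm (projKo (yt + gam *: Gfun A b g xh)) ^+ 2 - vnorm yt ^+ 2)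
       + (2 * alp)^-1 * vnorm (xh - xk) ^+ 2 + dotv v (z' - xh)
     <= f z' + (2 * gam)^-1 * (vnorm (projKo (yt + gam *: Gfun A b g z')) ^+ 2 - vnorm yt ^+ 2)
       + (2 * alp)^-1 * vnorm (z' - xk) ^+ 2) ->
  f xh + dotv (projKo (yt + gam *: Gfun A b g xh)) (Gfun A b g xh)
    + dotv (alp^-1 *: xk + v - alp^-1 *: xh) (z - xh)
  <= f z + dotv (projKo (yt + gam *: Gfun A b g xh)) (Gfun A b g z).
Proof.
move=> hf hg hc hgam halp hxh hz hsub.
set G := Gfun A b g in hsub *.
set yh := projKo (yt + gam *: G xh) in hsub *.
have hG : forall t,
  (forall k : 'I_p, G (t *: z + (1 - t) *: xh) (lshift q k) 0
      = t * G z (lshift q k) 0 + (1 - t) * G xh (lshift q k) 0) /\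
  (0 <= t <= 1 -> forall k : 'I_q, G (t *: z + (1 - t) *: xh) (rshift p k) 0
      <= t * G z (rshift p k) 0 + (1 - t) * G xh (rshift p k) 0).
  move=> t; split.
    move=> k; rewrite /G /Gfun !col_mxEu mulmxDr -!scalemxAr !mxE; ring.
  move=> ht k; rewrite /G /Gfun !col_mxEd; exact: hg.
have key : forall t, 0 < t -> t <= 1 ->
  t * (dotv v (z - xh) - alp^-1 * dotv (xh - xk) (z - xh)) <=
  t * (f z - f xh + (dotv yh (G z) - dotv yh (G xh))) +
  t ^+ 2 * (gam / 2 * dotv (G z - G xh) (G z - G xh) + (2 * alp)^-1 * dotv (z - xh) (z - xh)).
  move=> t ht0 ht1.
  have ht : 0 <= t <= 1 by apply/andP; split=> //; exact: ltW.
  set zt := t *: z + (1 - t) *: xh.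
  have hzt : Om zt by apply: conv_in => //; exact: ltW.
  have h1 := hsub zt hzt.
  have hF : f zt <= t * f z + (1 - t) * f xh by apply: hf.
  have hv : dotv v (zt - xh) = t * dotv v (z - xh).
    by rewrite /dotv mulr_sumr; apply: eq_bigr => j _; rewrite !mxE; ring.
  have hQ : vnorm (zt - xk) ^+ 2 = vnorm (xh - xk) ^+ 2 + 2 * t * dotv (xh - xk) (z - xh)
                                   + t ^+ 2 * dotv (z - xh) (z - xh).
    rewrite !vnorm_sq /dotv !mulr_sumr -!big_split /=; apply: eq_bigr => j _.
    rewrite !mxE; ring.
  have hN : vnorm (projKo (yt + gam *: G zt)) ^+ 2 <= vnorm yh ^+ 2
       + 2 * t * gam * (dotv yh (G z) - dotv yh (G xh))
       + gam ^+ 2 * t ^+ 2 * dotv (G z - G xh) (G z - G xh).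
    rewrite !vnorm_sq /dotv -sumrB !mulr_sumr -!big_split /=; apply: ler_sum => j _.
    have eA : forall (u w : 'cV[R]_(p + q)) c a, (u + c *: w) a 0 = u a 0 + c * w a 0.
      by move=> *; rewrite !mxE.
    have := @coordS2 p q (yt + gam *: G zt) (yt + gam *: G xh) j
              (gam * t * (G z j 0 - G xh j 0)).
    rewrite -/yh => hc'.
    have {hc'} hc' : projKo (yt + gam *: G zt) j 0 * projKo (yt + gam *: G zt) j 0 <=
      yh j 0 * yh j 0 + 2 * yh j 0 * (gam * t * (G z j 0 - G xh j 0)) +
      gam * t * (G z j 0 - G xh j 0) * (gam * t * (G z j 0 - G xh j 0)).
      apply: hc'.
        move=> k ->; rewrite !eA (hG t).1; ring.
      move=> k ->; rewrite !eA; have hk := (hG t).2 ht k.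
      rewrite -/zt in hk; nra.
    have eN : forall (w : 'cV[R]_(p + q)) a, (- w) a 0 = - w a 0 by move=> *; rewrite mxE.
    rewrite [(G z - G xh) j 0]mxE eN; apply: (le_trans hc'); rewrite le_eqVlt; apply/orP; left; apply/eqP; ring.
  rewrite hv hQ in h1.
  have hgi : 0 <= (2 * gam)^-1 by rewrite invr_ge0; lra.
  have hN' := ler_wpM2l hgi hN.
  have hgne : gam != 0 by rewrite gt_eqF.
  have hane : alp != 0 by rewrite gt_eqF.
  have e2 : (2 * gam)^-1 * (vnorm yh ^+ 2 + 2 * t * gam * (dotv yh (G z) - dotv yh (G xh))
       + gam ^+ 2 * t ^+ 2 * dotv (G z - G xh) (G z - G xh)) =
       (2 * gam)^-1 * vnorm yh ^+ 2 + t * (dotv yh (G z) - dotv yh (G xh))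
       + t ^+ 2 * (gam / 2 * dotv (G z - G xh) (G z - G xh)).
    by field.
  have e3 : (2 * alp)^-1 * (vnorm (xh - xk) ^+ 2 + 2 * t * dotv (xh - xk) (z - xh)
                                   + t ^+ 2 * dotv (z - xh) (z - xh)) =
       (2 * alp)^-1 * vnorm (xh - xk) ^+ 2 + t * (alp^-1 * dotv (xh - xk) (z - xh))
       + t ^+ 2 * ((2 * alp)^-1 * dotv (z - xh) (z - xh)).
    by field.
  rewrite e2 in hN'.
  rewrite e3 in h1.
  lra.
have eW : dotv (alp^-1 *: xk + v - alp^-1 *: xh) (z - xh) =
          dotv v (z - xh) - alp^-1 * dotv (xh - xk) (z - xh).
  by rewrite /dotv mulr_sumr -sumrB; apply: eq_bigr => j _; rewrite !mxE; ring.
rewrite eW.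
have : dotv v (z - xh) - alp^-1 * dotv (xh - xk) (z - xh) <=
   f z - f xh + (dotv yh (G z) - dotv yh (G xh)).
  apply: (fun hC => @limit_arg _ _ _ hC key).
  apply: addr_ge0; apply: mulr_ge0; rewrite ?dotv_ge0 //; rewrite ?invr_ge0; lra.
lra.
Qed.



Lemma ell_fin p q d (f : 'cV[R]_d -> R) A b g (Om : set 'cV[R]_d) x (y : 'cV[R]_(p + q)) :
  Om x -> coneKo y -> ell f A b g Om x y = (f x + dotv y (Gfun A b g x))%:E.
Proof. by move=> hx hy; rewrite /ell /Defs.indic asboolT // asboolT //= adde0 sube0. Qed.

Lemma ell_noOm p q d (f : 'cV[R]_d -> R) A b g (Om : set 'cV[R]_d) x (y : 'cV[R]_(p + q)) :
  ~ Om x -> coneKo y -> ell f A b g Om x y = +oo%E.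
Proof. by move=> hx hy; rewrite /ell /Defs.indic asboolF // asboolT. Qed.

Lemma ell_noK p q d (f : 'cV[R]_d -> R) A b g (Om : set 'cV[R]_d) x (y : 'cV[R]_(p + q)) :
  Om x -> ~ coneKo y -> ell f A b g Om x y = -oo%E.
Proof. by move=> hx hy; rewrite /ell /Defs.indic asboolT // asboolF. Qed.

Lemma ypart p q (yv lv Gv Y : 'cV[R]_(p + q)) (gam : R) : 0 < gam -> coneKo Y ->
  dotv Y Gv + dotv (gam^-1 *: yv - lv - gam^-1 *: projKo (yv - gam *: lv + gam *: Gv))
                   (Y - projKo (yv - gam *: lv + gam *: Gv))
  <= dotv (projKo (yv - gam *: lv + gam *: Gv)) Gv.
Proof.
move=> hg hY; rewrite -subr_le0 /dotv -big_split -sumrB /=; apply: sumr_le0 => j _.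
have h := @coordY p q (yv - gam *: lv + gam *: Gv) Y j hY.
move: h; move: (projKo (yv - gam *: lv + gam *: Gv)) => P h.
rewrite !mxE in h *.
have hgne : gam != 0 by rewrite gt_eqF.
have -> : Y j 0 * Gv j 0 + (gam^-1 * yv j 0 - lv j 0 - gam^-1 * P j 0) * (Y j 0 - P j 0)
    - P j 0 * Gv j 0
  = gam^-1 * ((yv j 0 - gam * lv j 0 + gam * Gv j 0 - P j 0) * (Y j 0 - P j 0)).
  by field.
by apply: mulr_ge0_le0 => //; rewrite invr_ge0 ltW.
Qed.

Lemma UkrTE m r s (U : 'M[R]_(r, m)) (W : 'I_r -> 'cV[R]_s) i a c :
  UkrT U W i a c = \sum_j U j i * W j a c.
Proof. by rewrite /UkrT summxE; apply: eq_bigr => j _; rewrite mxE. Qed.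

Lemma UkrE m r s (U : 'M[R]_(r, m)) (Y : 'I_m -> 'cV[R]_s) j a c :
  Ukr U Y j a c = \sum_i U j i * Y i a c.
Proof. by rewrite /Ukr summxE; apply: eq_bigr => i _; rewrite mxE. Qed.

Lemma UkrT_inj m r s (U : 'M[R]_(r, m)) (W : 'I_r -> 'cV[R]_s) :
  \rank U = r -> (forall i a c, UkrT U W i a c = 0) -> forall j, W j = 0.
Proof.
move=> rk h j; apply/matrixP => a c.
pose w : 'rV[R]_r := \row_l W l a c.
have hw : w *m U = 0 *m U.
  rewrite mul0mx; apply/matrixP => o i; rewrite [RHS]mxE -(h i a c) UkrTE mxE.
  by apply: eq_bigr => l _; rewrite mxE mulrC.
have hrf : row_free U by rewrite /row_free rk.
have := congr1 (fun M : 'rV[R]_r => M 0 j) (row_free_inj hrf hw).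
by rewrite !mxE.
Qed.

End H.
Theorem lemma2 (R : realType) (m : nat) (n : 'I_m -> nat) (p q r : nat)
  (f : forall i : 'I_m, 'cV[R]_(n i) -> R)
  (A : forall i : 'I_m, 'M[R]_(p, n i)) (b : 'I_m -> 'cV[R]_p)
  (g : forall i : 'I_m, 'cV[R]_(n i) -> 'cV[R]_q)
  (Om : forall i : 'I_m, set 'cV[R]_(n i))
  (E : rel 'I_m) (L : 'M[R]_m) (U : 'M[R]_(r, m))
  (theta alpha gamma : 'I_m -> R) (beta : R)
  (x : nat -> forall i : 'I_m, 'cV[R]_(n i))
  (y lam : nat -> 'I_m -> 'cV[R]_(p + q))
  (xh v : nat -> forall i : 'I_m, 'cV[R]_(n i))
  (yh : nat -> 'I_m -> 'cV[R]_(p + q))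
  (eps : nat -> 'I_m -> R)
  (Z Zh : nat -> 'I_r -> 'cV[R]_(p + q)) :
  (2 <= m)%N ->
  (forall i, (1 <= n i)%N) ->
  (* (A1) *)
  symmetric E ->
  (forall i j, connect E i j) ->
  L^T = L ->
  (forall i j, i != j -> ~~ E i j -> L i j = 0) ->
  (forall w : 'cV[R]_m, L *m w = 0 <-> exists c : R, w = c *: const_mx 1) ->
  L = U^T *m U ->
  \rank U = r ->
  U *m (const_mx 1 : 'cV[R]_m) = 0 ->
  (* (A2) *)
  (forall i, convex_fun (f i) /\ closed_fun (f i)) ->
  (forall i (j : 'I_q), convex_fun (fun z => g i z j 0) /\
                        closed_fun (fun z => g i z j 0)) ->
  (forall i, (exists z, Om i z) /\ closed (Om i) /\ convex_set (Om i)) ->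
  (exists xs : forall i : 'I_m, 'cV[R]_(n i),
     ((forall i, Om i (xs i)) /\ @coneK R p q (\sum_i Gfun (A i) (b i) (g i) (xs i))) /\
     forall xx : forall i : 'I_m, 'cV[R]_(n i),
       (forall i, Om i (xx i)) -> @coneK R p q (\sum_i Gfun (A i) (b i) (g i) (xx i)) ->
       \sum_i f i (xs i) <= \sum_i f i (xx i)) ->
  (* (A3) *)
  (exists xbar : forall i : 'I_m, 'cV[R]_(n i),
     (forall i, (Om i)° (xbar i)) /\
     \sum_i (A i *m xbar i - b i) = 0 /\
     forall j : 'I_q, (\sum_i g i (xbar i)) j 0 < 0) ->
  (* parameters *)
  (forall i, 0 < theta i) -> (forall i, 0 < alpha i) -> (forall i, 0 < gamma i) ->
  0 < beta ->
  (* initialization *)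
  (forall i, Om i (x 0%N i)) ->
  (forall i, @coneKo R p q (y 0%N i)) ->
  (forall i, lam 0%N i = 0) ->
  (* iterations of the inexact DPMM *)
  (forall k i, 0 <= eps k i) ->
  (forall k i,
     subdiff (phik (f i) (A i) (b i) (g i) (Om i) (gamma i) (alpha i) (x k i)
                   (y k i - gamma i *: lam k i)) (xh k i) (v k i) /\
     vnorm (v k i) <= eps k i) ->
  (forall k i, yh k i =
     @projKo R p q (y k i - gamma i *: lam k i + gamma i *: Gfun (A i) (b i) (g i) (xh k i))) ->
  (forall k i, x k.+1 i = (1 - theta i) *: x k i + theta i *: xh k i) ->
  (forall k i, lam k.+1 i = lam k i + beta *: \sum_j L i j *: yh k j) ->
  (forall k i, y k.+1 i = yh k i + gamma i *: (lam k i - lam k.+1 i)) ->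
  (* Z^k, Zh^k with Lambda^k = U^T Z^k and Lambdahat^k = Lambda^{k+1} = U^T Zh^k *)
  (forall k, lam k = UkrT U (Z k)) ->
  (forall k, lam k.+1 = UkrT U (Zh k)) ->
  forall k : nat,
    let xi := @Pt R m n (p + q) r (x k) (y k) (Z k) in
    let xi1 := @Pt R m n (p + q) r (x k.+1) (y k.+1) (Z k.+1) in
    let xih := @Pt R m n (p + q) r (xh k) (yh k) (Zh k) in
    let V := @Pt R m n (p + q) r (v k) (fun _ => 0) (fun _ => 0) in
    QPhi f A b g Om alpha gamma beta U xih (pt_add (Qop alpha gamma beta U xi) V) /\
    xi1 = pt_sub xi (Mop theta gamma U (pt_sub xi xih)) /\
    pt_norm V <= Num.sqrt (\sum_i eps k i ^+ 2).
Proof.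
move=> hm hn Esym Econn LT Lzero Lker LUU rkU U1 hfc hgc hOm hopt hslater hth hal hga hbe
  hx0 hy0 hl0 heps hsub hyh hxk hlam hyk hZ hZh k xi xi1 xih V.
have hOmx : forall i, Om i (xh k i).
  move=> i; have [[hfin _] _] := hsub k i; move: hfin.
  rewrite /phik /Defs.indic; case: asboolP => //.
have hyhK : forall i, coneKo (yh k i) by move=> i; rewrite hyh; exact: projKo_cone.
have hsubR : forall i z', Om i z' ->
   f i (xh k i) + (2 * gamma i)^-1 * (vnorm (projKo (y k i - gamma i *: lam k i
        + gamma i *: Gfun (A i) (b i) (g i) (xh k i))) ^+ 2 - vnorm (y k i - gamma i *: lam k i) ^+ 2)
     + (2 * alpha i)^-1 * vnorm (xh k i - x k i) ^+ 2 + dotv (v k i) (z' - xh k i)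
   <= f i z' + (2 * gamma i)^-1 * (vnorm (projKo (y k i - gamma i *: lam k i
        + gamma i *: Gfun (A i) (b i) (g i) z')) ^+ 2 - vnorm (y k i - gamma i *: lam k i) ^+ 2)
     + (2 * alpha i)^-1 * vnorm (z' - x k i) ^+ 2.
  move=> i z' hz; have [[_ h] _] := hsub k i; have := h z'.
  by rewrite /phik /Defs.indic asboolT // asboolT // !adde0 -EFinD lee_fin.
have hxp : forall i z', Om i z' ->
   f i (xh k i) + dotv (yh k i) (Gfun (A i) (b i) (g i) (xh k i))
     + dotv ((alpha i)^-1 *: x k i + v k i - (alpha i)^-1 *: xh k i) (z' - xh k i)
   <= f i z' + dotv (yh k i) (Gfun (A i) (b i) (g i) z').
  move=> i z' hz; rewrite hyh; apply: (@xpart R p q (n i) (f i) (A i) (b i) (g i) (Om i)) => //.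
  all: try exact: (hfc i).1; try exact: (hOm i).2.2; try exact: hOmx; try exact: hsubR.
  by move=> j; exact: (hgc i j).1.
have hLag : Lag f A b g Om (xh k) (yh k) =
   (\sum_i (f i (xh k i) + dotv (yh k i) (Gfun (A i) (b i) (g i) (xh k i))))%:E.
  by rewrite /Lag -sumEFin; apply: eq_bigr => i _; apply: ell_fin.
have hZ1 : forall j, Z k.+1 j = Zh k j.
  move=> j; apply/eqP; rewrite -subr_eq0; apply/eqP.
  apply: (@UkrT_inj _ _ _ _ U (fun j => Z k.+1 j - Zh k j) rkU) => i a c.
  rewrite UkrTE.
  have e1 := congr1 (fun F : 'I_m -> 'cV[R]_(p + q) => F i a c) (hZ k.+1).
  have e2 := congr1 (fun F : 'I_m -> 'cV[R]_(p + q) => F i a c) (hZh k).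
  rewrite /= !UkrTE in e1 e2.
  rewrite (eq_bigr (fun j => U j i * Z k.+1 j a c - U j i * Zh k j a c)); last first.
    by move=> l _; rewrite !mxE mulrBr.
  by rewrite sumrB -e1 -e2 subrr.
have hZh' : forall j, Zh k j = Z k j + beta *: Ukr U (yh k) j.
  move=> j; apply/eqP; rewrite -subr_eq0; apply/eqP.
  apply: (@UkrT_inj _ _ _ _ U (fun j => Zh k j - (Z k j + beta *: Ukr U (yh k) j)) rkU) => i a c.
  rewrite UkrTE.
  have e1 := congr1 (fun F : 'I_m -> 'cV[R]_(p + q) => F i a c) (hZ k).
  have e2 := congr1 (fun F : 'I_m -> 'cV[R]_(p + q) => F i a c) (hZh k).
  have e3 := congr1 (fun F : 'cV[R]_(p + q) => F a c) (hlam k i).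
  rewrite /= !UkrTE in e1 e2.
  rewrite /= mxE [in X in _ + X]mxE summxE in e3.
  rewrite (eq_bigr (fun j => U j i * Zh k j a c - U j i * Z k j a c
                 - beta * (U j i * \sum_l U j l * yh k l a c))); last first.
    by move=> l _; rewrite !mxE UkrE; ring.
  rewrite !sumrB -mulr_sumr -e1 -e2 e3.
  have e4 : \sum_j U j i * \sum_l U j l * yh k l a c = \sum_l (L i l *: yh k l) a c.
    under eq_bigr do rewrite mulr_sumr.
    rewrite exchange_big; apply: eq_bigr => l _.
    rewrite LUU !mxE mulr_suml; apply: eq_bigr => j0 _; by rewrite mxE mulrA.
  rewrite e4; ring.
have hbne : beta != 0 by rewrite gt_eqF.
split.
  exists (@Pt R m n (p + q) r
     (fun i => (alpha i)^-1 *: x k i + v k i - (alpha i)^-1 *: xh k i)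
     (fun i => ((gamma i)^-1 *: y k i - lam k i - (gamma i)^-1 *: yh k i) + UkrT U (Zh k) i)
     (fun j => - Ukr U (yh k) j)).
    split; [|split].
    - split; first by rewrite /= hLag.
      move=> z' /=; rewrite hLag /stk_dot /stk_sub /Lag -EFinD -big_split /= -sumEFin.
      apply: lee_sum => i _.
      have [hz|hz] := pselect (Om i (z' i)).
        by rewrite ell_fin // lee_fin; apply: hxp.
      by rewrite ell_noOm // leey.
    - exists (fun i => (gamma i)^-1 *: y k i - lam k i - (gamma i)^-1 *: yh k i) => //.
      split; first by rewrite /= hLag.
      move=> Y' /=; rewrite hLag leeNr -EFinN /Lag /stk_dot /stk_sub.
      rewrite opprD opprK -sumrB -sumEFin; apply: lee_sum => i _.
      have [hY|hY] := pselect (coneKo (Y' i)).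
        rewrite ell_fin // lee_fin.
        have := @ypart R p q (y k i) (lam k i) (Gfun (A i) (b i) (g i) (xh k i)) (Y' i) (gamma i)
                  (hga i) hY.
        rewrite -hyh; lra.
      by rewrite ell_noK // leNye.
    - by [].
  rewrite /pt_add /Qop /=; congr Pt.
  - apply: functional_extensionality_dep => i; rewrite /=.
    by apply/matrixP => a c; rewrite !mxE; ring.
  - apply: funext => i /=; rewrite (hZ k).
    by apply/matrixP => a c; rewrite !mxE; ring.
  - apply: funext => j /=; rewrite hZh'.
    by apply/matrixP => a c; rewrite !mxE; field.
split.
  rewrite /xi1 /pt_sub /Mop /=; congr Pt.
  - apply: functional_extensionality_dep => i /=; rewrite hxk.
    by apply/matrixP => a c; rewrite !mxE; ring.
  - apply: funext => i /=.
    have -> : UkrT U (fun j => Z k j - Zh k j) i = lam k i - lam k.+1 i.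
      by rewrite (hZ k) (hZh k) /UkrT -sumrB; apply: eq_bigr => j _; rewrite scalerBr.
    rewrite hyk.
    by apply/matrixP => a c; rewrite !mxE; ring.
  - apply: funext => j /=; rewrite hZ1.
    by apply/matrixP => a c; rewrite !mxE; ring.
rewrite /pt_norm /= ler_sqrt; last by apply: sumr_ge0 => i _; rewrite sqr_ge0.
have hz1 : \sum_(i < m) vnorm (0 : 'cV[R]_(p + q)) ^+ 2 = 0.
  by apply: big1 => i _; rewrite /vnorm /dotv big1 ?sqrtr0 ?expr0n // => j _; rewrite mxE mul0r.
have hz2 : \sum_(j < r) vnorm (0 : 'cV[R]_(p + q)) ^+ 2 = 0.
  by apply: big1 => i _; rewrite /vnorm /dotv big1 ?sqrtr0 ?expr0n // => j _; rewrite mxE mul0r.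
rewrite hz1 hz2 !addr0; apply: ler_sum => i _.
have [_ hv] := hsub k i.
have hv0 : 0 <= vnorm (v k i) by rewrite /vnorm sqrtr_ge0.
rewrite !expr2; apply: ler_pM => //.
Qed.
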